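(* For every integer $s\ge2$, $v^*_{RLP,2}=\tfrac12(\sqrt s+s)$.
   Context: Let $\Xi_2:=\{\xi\in\mathbb R^s:\|\xi-\tfrac12\mathbb 1_s\|_2\le\tfrac12\}$, where $\mathbb 1_s$ is the all-ones vector. Define $v^*_{RLP,2}$ as the infimum of $\sup_{\xi\in\Xi_2}y(\xi)_s$ over all maps $y:\Xi_2\to\mathbb R^s$ satisfying, for all $\xi\in\Xi_2$: $y(\xi)_1\ge\max\{\xi_1,1-\xi_1\}$ and $y(\xi)_i\ge\max\{\xi_i,1-\xi_i\}+y(\xi)_{i-1}$ for $i=2,\dots,s$. *)

(* Defs.v *)
From Stdlib Require Import Reals.
Open Scope R_scope.

(* Vectors of R^s are represented as functions nat -> R, with coordinates
   0..s-1 (0-based; paper coordinate i corresponds to index i-1) and all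
   coordinates >= s equal to 0. *)

Definition norm2 (s : nat) (v : nat -> R) : R :=
  sqrt (sum_f_R0 (fun i => (v i) ^ 2) (pred s)).

Definition Xi2 (s : nat) (xi : nat -> R) : Prop :=
  (forall i, (s <= i)%nat -> xi i = 0) /\
  norm2 s (fun i => xi i - 1/2) <= 1/2.

Definition feasible (s : nat) (y : (nat -> R) -> (nat -> R)) : Prop :=
  forall xi, Xi2 s xi ->
    y xi 0%nat >= Rmax (xi 0%nat) (1 - xi 0%nat) /\
    (forall i, (1 <= i)%nat -> (i < s)%nat ->
       y xi i >= Rmax (xi i) (1 - xi i) + y xi (pred i)).

Definition is_glb (E : R -> Prop) (m : R) : Prop :=
  (forall x, E x -> m <= x) /\ (forall b, (forall x, E x -> b <= x) -> b <= m).

(* The set of achievable (finite) objective values sup_{xi in Xi_2} y(xi)_s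
   over feasible y; feasible maps with unbounded objective contribute +oo,
   which does not affect the infimum. *)
Definition objective_values (s : nat) (v : R) : Prop :=
  exists y, feasible s y /\ is_lub (fun t => exists xi, Xi2 s xi /\ t = y xi (pred s)) v.

Definition v_RLP2_is (s : nat) (m : R) : Prop := is_glb (objective_values s) m.

(* Main.v *)
Require Import Defs.
From Stdlib Require Import Reals.
From Stdlib Require Import Lra Lia Psatz Arith.
Open Scope R_scope.

Definition F (xi : nat -> R) (i : nat) : R :=
  sum_f_R0 (fun j => Rmax (xi j) (1 - xi j)) i.

Definition xistar (n : nat) (i : nat) : R :=
  if (i <=? n)%nat then 1/2 + 1/(2 * sqrt (INR (S n))) else 0.

Lemma tpos n : 0 < sqrt (INR (S n)).
Proof. apply sqrt_lt_R0. apply lt_0_INR. lia. Qed.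

Lemma tsq n : sqrt (INR (S n)) * sqrt (INR (S n)) = INR (S n).
Proof. apply sqrt_sqrt. apply pos_INR. Qed.

Lemma xistar_Xi n : Xi2 (S n) (xistar n).
Proof.
  pose proof (tpos n) as Ht. pose proof (tsq n) as Hsq.
  set (t := sqrt (INR (S n))) in *.
  split.
  - intros i Hi. unfold xistar. destruct (Nat.leb_spec i n); [lia|reflexivity].
  - unfold norm2. simpl pred.
    rewrite (sum_eq _ (fun _ => (1/(2*t))^2)).
    2:{ intros i Hi. unfold xistar. destruct (Nat.leb_spec i n); [|lia].
        fold t. f_equal. ring. }
    rewrite sum_cte.
    replace ((1 / (2 * t)) ^ 2 * INR (S n)) with ((1/2)*(1/2)).
    + rewrite sqrt_square; lra.
    + rewrite <- Hsq. field. lra.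
Qed.

Lemma F_xistar n : F (xistar n) n = (sqrt (INR (S n)) + INR (S n)) / 2.
Proof.
  pose proof (tpos n) as Ht. pose proof (tsq n) as Hsq.
  set (t := sqrt (INR (S n))) in *.
  unfold F.
  rewrite (sum_eq _ (fun _ => 1/2 + 1/(2*t))).
  2:{ intros i Hi. unfold xistar. destruct (Nat.leb_spec i n); [|lia].
      fold t. unfold Rmax. destruct (Rle_dec _ _).
      - exfalso. assert (0 < 1/(2*t)) by (apply Rdiv_lt_0_compat; lra). lra.
      - reflexivity. }
  rewrite sum_cte. rewrite <- Hsq. field. lra.
Qed.

Lemma F_upper n xi : Xi2 (S n) xi -> F xi n <= (sqrt (INR (S n)) + INR (S n)) / 2.
Proof.
  intros [_ Hn].
  pose proof (tpos n) as Ht. pose proof (tsq n) as Hsq.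
  set (t := sqrt (INR (S n))) in *.
  unfold norm2 in Hn. simpl pred in Hn.
  set (S2 := sum_f_R0 (fun i => (xi i - 1/2)^2) n) in *.
  assert (H0 : 0 <= S2) by (apply cond_pos_sum; intros; apply pow2_ge_0).
  assert (HS : S2 <= 1/4).
  { rewrite <- (sqrt_sqrt S2 H0). pose proof (sqrt_pos S2). nra. }
  unfold F.
  apply Rle_trans with
    (sum_f_R0 (fun j => (1/2 + 1/(4*t)) + t * (xi j - 1/2)^2) n).
  - apply sum_Rle. intros i _.
    set (u := xi i - 1/2).
    assert (Hu : Rabs u <= 1/(4*t) + t * u^2).
    { apply Rmult_le_reg_l with (4*t); [lra|].
      replace (4 * t * (1 / (4 * t) + t * u ^ 2)) with (1 + 4*(t*t)*(u*u)) by (field; lra).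
      destruct (Rcase_abs u) as [Hl|Hr].
      - rewrite Rabs_left by lra. pose proof (pow2_ge_0 (2*t*u+1)). nra.
      - rewrite Rabs_right by lra. pose proof (pow2_ge_0 (2*t*u-1)). nra. }
    assert (Hm : Rmax (xi i) (1 - xi i) = 1/2 + Rabs u).
    { unfold Rmax, u. destruct (Rle_dec _ _); destruct (Rcase_abs (xi i - 1/2)) as [Hl|Hr];
      [rewrite Rabs_left by lra | rewrite Rabs_right by lra | rewrite Rabs_left by lra | rewrite Rabs_right by lra]; lra. }
    rewrite Hm. lra.
  - rewrite plus_sum, sum_cte.
    rewrite (sum_eq (fun i => t * (xi i - 1/2)^2) (fun i => (xi i - 1/2)^2 * t)) by (intros; ring).
    rewrite <- scal_sum. fold S2.
    assert (t * S2 <= t * (1/4)) by (apply Rmult_le_compat_l; lra).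
    assert (Heq : (1/2 + 1/(4*t)) * INR (S n) = INR (S n)/2 + t/4).
    { rewrite <- Hsq. field. lra. }
    lra.
Qed.

Lemma lower_y n y : feasible (S n) y -> forall i, (i <= n)%nat ->
  forall xi, Xi2 (S n) xi -> F xi i <= y xi i.
Proof.
  intros Hf i. induction i as [|k IH]; intros Hi xi Hxi.
  - destruct (Hf xi Hxi) as [H0 _]. unfold F. simpl. lra.
  - destruct (Hf xi Hxi) as [_ H1]. specialize (H1 (S k) ltac:(lia) ltac:(lia)).
    simpl pred in H1. specialize (IH ltac:(lia) xi Hxi).
    unfold F in *. simpl. lra.
Qed.

Theorem lemma2 (s : nat) (hs : (2 <= s)%nat) :
  v_RLP2_is s ((sqrt (INR s) + INR s) / 2).
Proof.
  destruct s as [|n]; [lia|].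
  split.
  - intros v [y [Hf [Hub _]]].
    rewrite <- (F_xistar n).
    apply Rle_trans with (y (xistar n) n).
    + apply (lower_y n y Hf n (le_n n)). apply xistar_Xi.
    + apply Hub. exists (xistar n). split; [apply xistar_Xi | reflexivity].
  - intros b Hb. apply Hb.
    exists (fun xi i => F xi i). split.
    + intros xi Hxi. split.
      * unfold F. simpl. lra.
      * intros i H1 H2. destruct i as [|k]; [lia|]. unfold F. simpl. lra.
    + simpl pred. split.
      * intros x [xi [Hxi ->]]. apply F_upper; auto.
      * intros b' Hb'. rewrite <- (F_xistar n). apply Hb'.
        exists (xistar n). split; [apply xistar_Xi | reflexivity].
Qed.
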